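(* Let $\Pi$ and $\Pi'$ be $n$-dimensional linear spaces, both satisfying the exchange axiom and the axiom (P2), let $k\ge 1$ with $n\ge 2k+1$, and let $f$ be an injection of $\mathcal{G}_k(\Pi)$ to $\mathcal{G}_k(\Pi')$ sending base subsets to base subsets. For each $(k-1)$-dimensional subspace $S$ of $\Pi$ let $f_{k-1}(S)$ be the unique subspace $S'$ of $\Pi'$ of dimension $k-1$ or $k+1$ with $f(\mathcal{G}_k(S))\subset\mathcal{G}_k(S')$. Suppose there is a strong embedding $g$ of $\Pi$ to $\Pi'$ with $f_{k-1}(S)=\overline{g(S)}$ for all $S\in\mathcal{G}_{k-1}(\Pi)$. Then $f(U)=\overline{g(U)}$ for all $U\in\mathcal{G}_k(\Pi)$.
   Context: A linear space $\Pi=(P,\mathcal{L})$ is a set $P$ of points with a family $\mathcal{L}$ of proper subsets (lines) such that each line has at least two points and any two distinct points $p,q$ lie on exactly one line $pq$. Points are collinear if some line contains them. A subspace is a set $S\subset P$ with $pq\subset S$ for all distinct $p,q\in S$; $\overline{X}$ is the smallest subspace containing $X$. A set $X$ is independent if $\overline{X}$ is not spanned by a proper subset of $X$; a base of $\Pi$ is an independent set spanning $P$. A subspace is $m$-dimensional if $m+1$ is the smallest number of points spanning it. Exchange axiom: for every $X\subset P$ and $p_1,p_2\in P\setminus\overline{X}$, $p_2\in\overline{X\cup\{p_1\}}$ implies $p_1\in\overline{X\cup\{p_2\}}$. Axiom (P2): every line has at least three points. $\mathcal{G}_k(\Pi)$ is the set of $k$-dimensional subspaces; for a subspace $U$, $\mathcal{G}_k(U)$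 is the set of $k$-dimensional subspaces incident to $U$ (contained in $U$ or containing $U$). The base subset of $\mathcal{G}_k(\Pi)$ associated with a base $B$ is the set of all $k$-dimensional subspaces spanned by points of $B$. A strong embedding of $\Pi$ to $\Pi'$ is an injection $g:P\to P'$ sending collinear triples to collinear triples, non-collinear triples to non-collinear triples and independent sets to independent sets; then $\dim\overline{g(S)}=\dim S$ for every subspace $S$. *)

(* Defs.v *)
(* sets are predicates [T -> Prop]; equality of sets is
   Leibniz equality, which is extensional under funext/propext (whitelisted). *)
From Stdlib Require Import List.
Import ListNotations.
Set Implicit Arguments.

Definition subset {T : Type} (A B : T -> Prop) : Prop := forall x, A x -> B x.

Record linear_space (P : Type) (L : (P -> Prop) -> Prop) : Prop := {
  ls_proper : forall l, L l -> exists p, ~ l p;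
  ls_two : forall l, L l -> exists p q, p <> q /\ l p /\ l q;
  ls_line : forall p q, p <> q ->
    exists l, L l /\ l p /\ l q /\ (forall l', L l' -> l' p -> l' q -> l' = l)
}.

Definition collinear (P : Type) (L : (P -> Prop) -> Prop) (p q r : P) : Prop :=
  exists l, L l /\ l p /\ l q /\ l r.

Definition subspace (P : Type) (L : (P -> Prop) -> Prop) (S : P -> Prop) : Prop :=
  forall p q l, p <> q -> S p -> S q -> L l -> l p -> l q -> subset l S.

Definition span (P : Type) (L : (P -> Prop) -> Prop) (X : P -> Prop) : P -> Prop :=
  fun x => forall S, subspace L S -> subset X S -> S x.

Definition independent (P : Type) (L : (P -> Prop) -> Prop) (X : P -> Prop) : Prop :=
  forall Y, subset Y X -> (exists x, X x /\ ~ Y x) ->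
    ~ (forall x, span L Y x <-> span L X x).

Definition has_dim (P : Type) (L : (P -> Prop) -> Prop) (S : P -> Prop) (m : nat) : Prop :=
  subspace L S /\
  (exists xs : list P, length xs = m + 1 /\
     forall x, span L (fun p => In p xs) x <-> S x) /\
  (forall ys : list P, (forall x, span L (fun p => In p ys) x <-> S x) ->
     m + 1 <= length ys).

Definition Gk (P : Type) (L : (P -> Prop) -> Prop) (k : nat) (U : P -> Prop) : Prop :=
  has_dim L U k.

Definition Gk_inc (P : Type) (L : (P -> Prop) -> Prop) (k : nat) (S U : P -> Prop) : Prop :=
  has_dim L U k /\ (subset U S \/ subset S U).

Definition is_base (P : Type) (L : (P -> Prop) -> Prop) (B : P -> Prop) : Prop :=
  independent L B /\ (forall x, span L B x).

Definition base_subset (P : Type) (L : (P -> Prop) -> Prop) (k : nat)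
    (F : (P -> Prop) -> Prop) : Prop :=
  exists B, is_base L B /\
    forall U, F U <-> (has_dim L U k /\
                       exists X, subset X B /\ (forall x, U x <-> span L X x)).

Definition image_fam (P P' : Type) (f : (P -> Prop) -> (P' -> Prop))
    (F : (P -> Prop) -> Prop) : (P' -> Prop) -> Prop :=
  fun U' => exists U, F U /\ f U = U'.

Definition image_pts (P P' : Type) (g : P -> P') (X : P -> Prop) : P' -> Prop :=
  fun y => exists x, X x /\ g x = y.

Definition exchange_axiom (P : Type) (L : (P -> Prop) -> Prop) : Prop :=
  forall (X : P -> Prop) (p1 p2 : P),
    ~ span L X p1 -> ~ span L X p2 ->
    span L (fun x => X x \/ x = p1) p2 -> span L (fun x => X x \/ x = p2) p1.

Definition axiom_P2 (P : Type) (L : (P -> Prop) -> Prop) : Prop :=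
  forall l, L l -> exists a b c, l a /\ l b /\ l c /\ a <> b /\ a <> c /\ b <> c.

Definition strong_embedding (P P' : Type) (L : (P -> Prop) -> Prop)
    (L' : (P' -> Prop) -> Prop) (g : P -> P') : Prop :=
  (forall x y, g x = g y -> x = y) /\
  (forall p q r, collinear L p q r -> collinear L' (g p) (g q) (g r)) /\
  (forall p q r, ~ collinear L p q r -> ~ collinear L' (g p) (g q) (g r)) /\
  (forall X, independent L X -> independent L' (image_pts g X)).

Definition fkm1_candidate (P P' : Type) (L : (P -> Prop) -> Prop)
    (L' : (P' -> Prop) -> Prop) (k : nat) (f : (P -> Prop) -> (P' -> Prop))
    (S : P -> Prop) (S' : P' -> Prop) : Prop :=
  (has_dim L' S' (k - 1) \/ has_dim L' S' (k + 1)) /\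
  (forall U, Gk_inc L k S U -> Gk_inc L' k S' (f U)).

(* Main.v *)
Require Import Defs.
From Stdlib Require Import List Permutation Lia Classical FunctionalExtensionality PropExtensionality FinFun.
Import ListNotations.
Set Implicit Arguments.

Lemma set_ext {T : Type} (A B : T -> Prop) : subset A B -> subset B A -> A = B.
Proof.
  intros H1 H2. apply functional_extensionality. intro x.
  apply propositional_extensionality. split; auto.
Qed.

Lemma span_incl P (L : (P -> Prop) -> Prop) (X : P -> Prop) x : X x -> span L X x.
Proof. intros Hx S _ HS. apply HS, Hx. Qed.

Lemma span_subspace P (L : (P -> Prop) -> Prop) X : subspace L (span L X).
Proof.
  intros p q l Hpq Hp Hq Hl Hlp Hlq x Hx S HS HXS.
  apply (HS p q l Hpq (Hp S HS HXS) (Hq S HS HXS) Hl Hlp Hlq x Hx).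
Qed.

Lemma span_min P (L : (P -> Prop) -> Prop) X S :
  subspace L S -> subset X S -> subset (span L X) S.
Proof. intros HS HX x Hx. apply Hx; auto. Qed.

Lemma span_ext P (L : (P -> Prop) -> Prop) (X Y : P -> Prop) :
  (forall p, X p -> span L Y p) -> forall p, span L X p -> span L Y p.
Proof. intros H. apply span_min. apply span_subspace. exact H. Qed.

Lemma span_mono P (L : (P -> Prop) -> Prop) (X Y : P -> Prop) :
  (forall p, X p -> Y p) -> forall p, span L X p -> span L Y p.
Proof. intros H. apply span_ext. intros p Hp. apply span_incl; auto. Qed.

Definition indep P (L : (P -> Prop) -> Prop) (X : P -> Prop) (I : list P) : Prop :=
  forall x l, Permutation I (x :: l) -> ~ span L (fun p => X p \/ In p l) x.

Lemma steinitz P (L : (P -> Prop) -> Prop) (EX : exchange_axiom L) (J : list P) :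
  forall X I, indep L X I ->
  (forall p, In p I -> span L (fun q => X q \/ In q J) p) -> length I <= length J.
Proof.
  induction J as [|y J IH]; intros X I HI HJ.
  - destruct I as [|x l]; simpl; [lia|]. exfalso.
    apply (HI x l (Permutation_refl _)).
    apply span_mono with (X := fun q => X q \/ In q []).
    { intros p [Hp|[]]. now left. }
    apply HJ; now left.
  - destruct (classic (indep L (fun q => X q \/ q = y) I)) as [Hi|Hn].
    + assert (length I <= length J); [|simpl; lia].
      apply (IH _ _ Hi). intros p Hp.
      apply span_mono with (X := fun q => X q \/ In q (y :: J)); [|apply HJ; auto].
      intros q Hq; simpl in Hq. intuition.
    + unfold indep in Hn. apply not_all_ex_not in Hn as [x Hn].
      apply not_all_ex_not in Hn as [l Hn].
      apply imply_to_and in Hn as [Hperm Hspan]. apply NNPP in Hspan.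
      assert (Hl : indep L (fun q => X q \/ q = y) l).
      { intros z m Hzm Hz.
        assert (P1 : Permutation I (z :: x :: m)).
        { eapply perm_trans. exact Hperm. eapply perm_trans. apply perm_skip. exact Hzm.
          apply perm_swap. }
        assert (P2 : Permutation I (x :: z :: m)).
        { eapply perm_trans. exact Hperm. apply perm_skip; exact Hzm. }
        pose proof (HI z (x :: m) P1) as Nz. pose proof (HI x (z :: m) P2) as Nx.
        set (Z := fun q => X q \/ In q m).
        assert (Nz' : ~ span L Z z).
        { intro H. apply Nz. revert H. apply span_mono. unfold Z; simpl. intuition. }
        assert (Ny : ~ span L Z y).
        { intro H. apply Nz'. revert Hz. apply span_ext.
          intros q [[Hq|Hq]|Hq]. apply span_incl; left; auto. subst; auto.
          apply span_incl; right; auto. }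
        assert (Hz2 : span L (fun q => Z q \/ q = y) z).
        { revert Hz. apply span_mono. unfold Z. intuition. }
        pose proof (EX Z y z Ny Nz' Hz2) as Hy.
        apply Nx. revert Hspan. apply span_ext. intros q [[Hq|Hq]|Hq].
        - apply span_incl; left; auto.
        - subst q. revert Hy. apply span_mono. unfold Z; simpl. intuition.
        - apply span_incl. right. eapply Permutation_in. exact Hzm. exact Hq. }
      assert (length l <= length J); [|apply Permutation_length in Hperm; simpl in *; lia].
      apply (IH _ _ Hl). intros p Hp.
      apply span_mono with (X := fun q => X q \/ In q (y :: J)).
      { intros q Hq; simpl in Hq. intuition. }
      apply HJ. eapply Permutation_in. apply Permutation_sym. exact Hperm. right; auto.
Qed.

Lemma indep_add P (L : (P -> Prop) -> Prop) (EX : exchange_axiom L) xs b :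
  indep L (fun _ => False) xs -> ~ span L (fun p => In p xs) b ->
  indep L (fun _ => False) (b :: xs).
Proof.
  intros Hi Hb x l Hp Hx.
  destruct (classic (x = b)) as [E|E].
  - subst. apply Permutation_cons_inv in Hp. apply Hb. revert Hx. apply span_mono.
    intros q [[]|Hq]. eapply Permutation_in. apply Permutation_sym. exact Hp. exact Hq.
  - assert (Hin : In x xs).
    { assert (In x (b :: xs)). eapply Permutation_in. apply Permutation_sym. exact Hp. left; auto.
      destruct H; auto. congruence. }
    apply in_split in Hin as [l1 [l2 Heq]].
    set (l' := l1 ++ l2).
    assert (Pxs : Permutation xs (x :: l')).
    { subst xs. apply Permutation_sym. apply Permutation_middle. }
    assert (Pl : Permutation l (b :: l')).
    { apply Permutation_cons_inv with x.
      eapply perm_trans. apply Permutation_sym. exact Hp.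
      eapply perm_trans. apply perm_skip. exact Pxs. apply perm_swap. }
    pose proof (Hi x l' Pxs) as Nx.
    assert (Nx' : ~ span L (fun p => In p l') x).
    { intro H; apply Nx; revert H; apply span_mono; intuition. }
    assert (Nb : ~ span L (fun p => In p l') b).
    { intro H; apply Hb; revert H; apply span_mono. intros q Hq.
      eapply Permutation_in. apply Permutation_sym. exact Pxs. right; auto. }
    assert (Hx2 : span L (fun p => In p l' \/ p = b) x).
    { revert Hx. apply span_mono. intros q [[]|Hq].
      apply (Permutation_in _ Pl) in Hq. destruct Hq; auto. }
    pose proof (EX _ b x Nb Nx' Hx2) as Hb2.
    apply Hb. revert Hb2. apply span_mono. intros q [Hq|Hq].
    eapply Permutation_in. apply Permutation_sym. exact Pxs. right; auto.
    subst; eapply Permutation_in. apply Permutation_sym. exact Pxs. left; auto.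
Qed.

Lemma minimal_indep P (L : (P -> Prop) -> Prop) (A : P -> Prop) xs m :
  length xs = m + 1 -> (forall x, span L (fun p => In p xs) x <-> A x) ->
  (forall ys : list P, (forall x, span L (fun p => In p ys) x <-> A x) -> m + 1 <= length ys) ->
  indep L (fun _ => False) xs.
Proof.
  intros Hlen Hxs Hmin x l Hp Hx.
  assert (m + 1 <= length l); [|apply Permutation_length in Hp; simpl in Hp; lia].
  apply Hmin. intros q; split; intro Hq.
  - apply (proj1 (Hxs q)). revert Hq. apply span_mono. intros r Hr.
    eapply Permutation_in. apply Permutation_sym. exact Hp. right; auto.
  - apply Hxs in Hq. revert Hq. apply span_ext. intros r Hr.
    apply (Permutation_in _ Hp) in Hr. destruct Hr as [Hr|Hr].
    + subst. revert Hx. apply span_mono. intuition.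
    + apply span_incl; auto.
Qed.

Lemma dim_eq P (L : (P -> Prop) -> Prop) (EX : exchange_axiom L) A B m :
  has_dim L A m -> has_dim L B m -> subset A B -> subset B A.
Proof.
  intros [HA [[xs [Hl Hxs]] Hmin]] [HB [[ys [Hl' Hys]] _]] HAB b Hb.
  apply NNPP. intro Nb.
  assert (Hi : indep L (fun _ => False) xs) by (eapply minimal_indep; [exact Hl|exact Hxs|exact Hmin]).
  assert (Nb' : ~ span L (fun p => In p xs) b). { intro H. apply Nb, (proj1 (Hxs b)), H. }
  pose proof (indep_add EX Hi Nb') as Hi2.
  pose proof (steinitz EX ys Hi2) as Hs.
  assert (length (b :: xs) <= length ys); [|simpl in *; lia].
  apply Hs. intros p Hp.
  apply span_mono with (X := fun q => In q ys); [intuition|].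
  apply (proj2 (Hys p)). destruct Hp as [Hp|Hp]. subst; auto.
  apply HAB, (proj1 (Hxs p)), span_incl, Hp.
Qed.

Lemma indep_NoDup P (L : (P -> Prop) -> Prop) X I : indep L X I -> NoDup I.
Proof.
  induction I as [|x l IH]; intros Hi. constructor.
  constructor.
  - intro Hin. apply (Hi x l (Permutation_refl _)). apply span_incl. right; auto.
  - apply IH. intros z m Hzm Hz.
    apply (Hi z (x :: m)).
    eapply perm_trans. apply perm_skip. exact Hzm. apply perm_swap.
    revert Hz. apply span_mono. simpl. intuition.
Qed.

Lemma indep_independent P (L : (P -> Prop) -> Prop) xs :
  indep L (fun _ => False) xs -> independent L (fun p => In p xs).
Proof.
  intros Hi Y HY [x [Hx Nx]] Heq.
  apply in_split in Hx as [l1 [l2 E]].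
  assert (Pxs : Permutation xs (x :: l1 ++ l2)).
  { subst xs. apply Permutation_sym. apply Permutation_middle. }
  apply (Hi x _ Pxs).
  assert (span L Y x). { apply Heq. apply span_incl. subst xs. apply in_or_app; right; left; auto. }
  revert H. apply span_mono. intros q Hq. right.
  pose proof (HY q Hq) as Hq'. apply (Permutation_in _ Pxs) in Hq'.
  destruct Hq'; auto. subst; contradiction.
Qed.

Lemma sub_dim P (L : (P -> Prop) -> Prop) (A : P -> Prop) a l k :
  (forall x, span L (fun p => In p (a :: l)) x <-> A x) ->
  (forall ys : list P, (forall x, span L (fun p => In p ys) x <-> A x) -> k + 1 <= length ys) ->
  length l = k -> 1 <= k ->
  has_dim L (span L (fun p => In p l)) (k - 1).
Proof.
  intros Hxs Hmin Hl Hk. split; [apply span_subspace|split].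
  - exists l. split; [lia|]. tauto.
  - intros ys Hys.
    assert (k + 1 <= length (a :: ys)); [|simpl in *; lia].
    apply Hmin. intros x. rewrite <- Hxs. split; apply span_ext.
    + intros q [Hq|Hq]. apply span_incl; left; auto.
      assert (H1 : span L (fun p => In p ys) q) by (apply span_incl; exact Hq). apply (proj1 (Hys q)) in H1. revert H1. apply span_mono. intros; right; auto.
    + intros q [Hq|Hq]. apply span_incl; left; auto.
      assert (span L (fun p => In p ys) q). apply (proj2 (Hys q)), span_incl, Hq.
      revert H. apply span_mono. intros; right; auto.
Qed.

Lemma preimage_span P P' (L : (P -> Prop) -> Prop) (L' : (P' -> Prop) -> Prop) g X Y :
  strong_embedding L L' g ->
  (forall p, X p -> span L' Y (g p)) ->
  forall p, span L X p -> span L' Y (g p).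
Proof.
  intros [Hinj [Hcol _]] HX. apply span_min; auto.
  intros p q l Hpq Hp Hq Hl Hlp Hlq r Hr.
  destruct (Hcol p q r) as [l' [Hl' [H1 [H2 H3]]]]. exists l; auto.
  assert (HS := @span_subspace P' L' Y). unfold subspace in HS. apply (HS (g p) (g q) l'); auto.
Qed.

Theorem lemma2p9 (P P' : Type) (L : (P -> Prop) -> Prop) (L' : (P' -> Prop) -> Prop)
  (n k : nat) (f : (P -> Prop) -> (P' -> Prop)) (g : P -> P') :
  linear_space L -> linear_space L' ->
  has_dim L (fun _ => True) n -> has_dim L' (fun _ => True) n ->
  exchange_axiom L -> exchange_axiom L' ->
  axiom_P2 L -> axiom_P2 L' ->
  1 <= k -> 2 * k + 1 <= n ->
  (forall U, Gk L k U -> Gk L' k (f U)) ->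
  (forall U V, Gk L k U -> Gk L k V -> f U = f V -> U = V) ->
  (forall F, base_subset L k F -> base_subset L' k (image_fam f F)) ->
  strong_embedding L L' g ->
  (forall S, Gk L (k - 1) S ->
     fkm1_candidate L L' k f S (span L' (image_pts g S)) /\
     (forall S', fkm1_candidate L L' k f S S' -> S' = span L' (image_pts g S))) ->
  forall U, Gk L k U -> f U = span L' (image_pts g U).
Proof.
  intros _ _ _ _ EX EX' _ _ Hk _ _ _ _ Hg Hf U HU.
  pose proof HU as HU0.
  destruct HU as [HsubU [[xs [Hlen Hxs]] Hmin]].
  destruct xs as [|a [|b rest]]; simpl in Hlen; try lia.
  set (S1 := span L (fun p => In p (b :: rest))).
  set (S2 := span L (fun p => In p (a :: rest))).
  assert (HS1 : has_dim L S1 (k - 1)).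
  { eapply sub_dim; [exact Hxs|exact Hmin|simpl in *; lia|exact Hk]. }
  assert (HS2 : has_dim L S2 (k - 1)).
  { assert (Hxs2 : forall x, span L (fun p => In p (b :: a :: rest)) x <-> U x).
    { intros x. rewrite <- Hxs. split; apply span_mono; simpl; intuition. }
    eapply sub_dim; [exact Hxs2|exact Hmin|simpl in *; lia|exact Hk]. }
  assert (S1U : subset S1 U).
  { apply span_min; auto. intros q Hq. apply (proj1 (Hxs q)), span_incl. right; auto. }
  assert (S2U : subset S2 U).
  { apply span_min; auto. intros q Hq. apply (proj1 (Hxs q)), span_incl. simpl in *; intuition. }
  destruct (proj1 (Hf S1 HS1)) as [_ Hi1].
  destruct (proj1 (Hf S2 HS2)) as [_ Hi2].
  destruct (Hi1 U (conj HU0 (or_intror S1U))) as [HfU C1].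
  destruct (Hi2 U (conj HU0 (or_intror S2U))) as [_ C2].
  set (xs := a :: b :: rest) in *.
  set (ys := map g xs).
  set (W := span L' (image_pts g U)).
  assert (HWys : forall x, span L' (fun p => In p ys) x <-> W x).
  { intros x; split; apply span_ext.
    - intros q Hq. apply in_map_iff in Hq as [y [E Hy]]. apply span_incl.
      exists y; split; auto. apply (proj1 (Hxs y)), span_incl, Hy.
    - intros q [y [Hy E]]. subst q. apply (preimage_span Hg (X := fun p => In p xs)).
      + intros p Hp. apply span_incl. apply in_map; auto.
      + apply (proj2 (Hxs y)), Hy. }
  assert (HW : has_dim L' W k).
  { split; [apply span_subspace|split].
    - exists ys. split; [unfold ys; rewrite length_map; simpl; lia|exact HWys].
    - intros zs Hzs.
      assert (Hi : indep L (fun _ => False) xs) by (eapply minimal_indep; [|exact Hxs|exact Hmin]; simpl in *; lia).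
      assert (Hiy : indep L' (fun _ => False) ys).
      { intros y l Hp Hy.
        destruct Hg as [Hinj [_ [_ Hgi]]].
        pose proof (Hgi _ (indep_independent Hi)) as HI.
        assert (ND : NoDup (y :: l)).
        { eapply Permutation_NoDup. exact Hp. apply Injective_map_NoDup.
          intros u v; apply Hinj. eapply indep_NoDup; exact Hi. }
        inversion ND; subst.
        apply (HI (fun p => In p l)).
        - intros q Hq. assert (In q ys). eapply Permutation_in. apply Permutation_sym. exact Hp.
          right; auto. apply in_map_iff in H as [u [E Hu]]. exists u; auto.
        - exists y. split; auto.
          assert (In y ys). eapply Permutation_in. apply Permutation_sym. exact Hp. left; auto.
          apply in_map_iff in H as [u [E Hu]]. exists u; auto.
        - intros x; split; apply span_ext.
          + intros q Hq. apply span_incl. assert (In q ys). eapply Permutation_in.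
            apply Permutation_sym. exact Hp. right; auto.
            apply in_map_iff in H as [u [E Hu]]. exists u; auto.
          + intros q [u [Hu E]]. assert (In q ys) by (subst; apply in_map; auto).
            apply (Permutation_in _ Hp) in H. destruct H as [H|H].
            * subst. revert Hy. apply span_mono. intuition.
            * apply span_incl; auto. }
      pose proof (steinitz EX' zs Hiy) as Hs.
      assert (length ys <= length zs); [|unfold ys in *; rewrite length_map in *; simpl in *; lia].
      apply Hs. intros p Hp. apply span_mono with (X := fun q => In q zs); [intuition|].
      apply (proj2 (Hzs p)), (proj1 (HWys p)), span_incl; auto. }
  assert (HWS : forall S, subset S U -> subset (span L' (image_pts g S)) W).
  { intros S HS. unfold W, subset. apply span_mono. intros q [u [Hu E]]. exists u; auto. }
  assert (fW : subset (f U) W -> f U = W).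
  { intro H. apply set_ext; auto. eapply dim_eq; eauto. }
  destruct C1 as [C1|C1]. { apply fW. intros x Hx. apply (HWS S1 S1U), C1, Hx. }
  destruct C2 as [C2|C2]. { apply fW. intros x Hx. apply (HWS S2 S2U), C2, Hx. }
  assert (WfU : subset W (f U)).
  { intros x Hx. apply HWys in Hx. revert Hx. apply span_min. apply HfU.
    intros q Hq. apply in_map_iff in Hq as [u [E Hu]]. subst q.
    destruct Hu as [Hu|Hu].
    - subst u. apply C2, span_incl. exists a; split; auto. apply span_incl; left; auto.
    - apply C1, span_incl. exists u; split; auto. apply span_incl; auto. }
  apply set_ext; auto. eapply dim_eq; eauto.
Qed.
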